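(* In the notation of the context, for $0\le i\le D-1$ the following identities of Laurent polynomials in $\eta$ hold: $$\eta\,\ell_i^-=(\tau q^D+\tau^{-1})(q^{i-D}-1)\ell^+_{i-1}+(\tau q^D+\tau^{-1})q^{i-D}\ell^-_i+\tau(q^D-q^{i+1}+1)\ell^+_i+\tau(1-q^{i+1})\ell^-_{i+1},$$ $$\eta^{-1}\ell_i^-=\tau^{-1}(1-q^{i-D})\ell^-_{i-1}+(\tau q^D+\tau^{-1})(1-q^{i-D})\ell^+_{i-1}-\tau(q^D-q^i+1)\ell^+_i,$$ $$\eta\,\ell_i^+=\tau^{-1}(1-q^{i-D})\ell^+_{i-1}-\tau^{-1}q^{i-D}\ell^-_i,$$ $$\eta^{-1}\ell_i^+=\tau^{-1}q^{i-D+1}\ell^-_i+(\tau q^D+\tau^{-1})q^{i-D+1}\ell^+_i+\tau(1-q^{i+1})\ell^+_{i+1}.$$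
   Context: Let $q$ be a prime power, $D\ge3$ an integer, and $e\in\{0,\tfrac12,1,\tfrac32,2\}$ (with $q$ a square when $e\in\{\tfrac12,\tfrac32\}$). Let $\tau=\sqrt{-1}\,q^{-(D+e)/2}$. Write $(r;q)_n=(1-r)(1-rq)\cdots(1-rq^{n-1})$ and ${}_3\phi_2\!\left(\begin{smallmatrix}r_1,r_2,r_3\\ s_1,s_2\end{smallmatrix};q,z\right)=\sum_{n\ge0}\frac{(r_1;q)_n(r_2;q)_n(r_3;q)_n}{(s_1;q)_n(s_2;q)_n}\frac{z^n}{(q;q)_n}$. For a nonzero scalar $t$ and integers $0\le i\le d$ define the Laurent polynomial $h_i(\eta;t,d;q)=\frac{(q^{-d};q)_i}{t^i}\,{}_3\phi_2\!\left(\begin{smallmatrix}q^{-i},\,t\eta^{-1},\,t\eta\\ 0,\,q^{-d}\end{smallmatrix};q,q\right)$. Let $h_i=h_i(\eta;\tau,D;q)$ ($0\le i\le D$), $h_i^\perp=h_i(\eta;\tau q,D-2;q)$ ($0\le i\le D-2$), $h^\perp_{-1}=0$, $h^\perp_{D-1}=\eta^{1-D}\prod_{n=1}^{D-1}(\eta-\tau q^n)(\eta-\tau^{-1}q^{-n})$, and $p^\perp=\eta^{-1}(\eta-\tau)(\eta-\tau^{-1}q^{-D})$. For $0\le i\le D-1$ define $\ell_i^+=\frac{h_{i+1}-p^\perp h_i^\perp}{\tau^{i+1}(1-q^D)(q;q)_i}$ and $\ell_i^-=\frac{q^D-q^i}{\tau^i(q^D-1)(q;q)_i}\Big(h_i-\frac{1-q^i}{q^D-q^i}p^\perp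 h^\perp_{i-1}\Big)$ (the non-symmetric dual $q$-Krawtchouk polynomials). Also set $\ell^\pm_{-1}=0$, $\ell_D^+=-\frac{\eta^{-1}p^\perp h^\perp_{D-1}}{\tau^{D+1}(q;q)_D}$, $\ell_D^-=\frac{p^\perp h^\perp_{D-1}}{\tau^D(q;q)_D}$. *)

(* Defs.v *)
(* Laurent polynomials in etaX over algC are viewed inside the
   field of rational functions {fraction {poly algC}}, with etaX := 'X. *)
From HB Require Import structures.
From mathcomp Require Import all_boot all_order all_algebra all_field.
From mathcomp Require Import fraction.
Set Implicit Arguments. Unset Strict Implicit. Unset Printing Implicit Defensive.
Import Order.TTheory GRing.Theory Num.Theory.
Local Open Scope ring_scope.

Notation RF := {fraction {poly algC}}.

Definition cF (c : algC) : RF := FracField.tofrac (c%:P).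
Definition etaX : RF := FracField.tofrac 'X.

Definition qpoch (r qq : RF) (n : nat) : RF := \prod_(k < n) (1 - r * qq ^+ k).

Section Defs.
Variables (q : nat) (D : nat) (tau : algC).
Let Q : RF := q%:R.
Let T : RF := cF tau.

(* h_i(etaX; t, d; q), 3phi2 with numerator parameter q^{-i}: terminating sum, n = 0..i *)
Definition hpol (i : nat) (t : RF) (d : nat) : RF :=
  qpoch (Q ^- d) Q i / t ^+ i *
  \sum_(n < i.+1)
     (qpoch (Q ^- i) Q n * qpoch (t / etaX) Q n * qpoch (t * etaX) Q n)
     / (qpoch 0 Q n * qpoch (Q ^- d) Q n) * (Q ^+ n / qpoch Q Q n).

Definition hh (i : nat) : RF := hpol i T D.

Definition hperp (j : nat) : RF :=
  if j == D.-1 then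
    etaX ^- D.-1 * \prod_(1 <= n < D) ((etaX - T * Q ^+ n) * (etaX - T^-1 * Q ^- n))
  else hpol j (T * Q) (D - 2).

Definition hperp_prev (i : nat) : RF := if i is j.+1 then hperp j else 0.

Definition pperp : RF := etaX^-1 * (etaX - T) * (etaX - T^-1 * Q ^- D).

Definition lplus (i : nat) : RF :=
  if i == D then - (etaX^-1 * pperp * hperp D.-1) / (T ^+ D.+1 * qpoch Q Q D)
  else (hh i.+1 - pperp * hperp i) / (T ^+ i.+1 * (1 - Q ^+ D) * qpoch Q Q i).

Definition lminus (i : nat) : RF :=
  if i == D then pperp * hperp D.-1 / (T ^+ D * qpoch Q Q D)
  else (Q ^+ D - Q ^+ i) / (T ^+ i * (Q ^+ D - 1) * qpoch Q Q i) *
       (hh i - (1 - Q ^+ i) / (Q ^+ D - Q ^+ i) * pperp * hperp_prev i).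

Definition lplus_prev (i : nat) : RF := if i is j.+1 then lplus j else 0.
Definition lminus_prev (i : nat) : RF := if i is j.+1 then lminus j else 0.
End Defs.

(* tau = sqrt(-1) q^{-(D+e)/2}, with e2 = 2e; q^{(D+e)/2} = (q^(2D+e2))^(1/4) *)
Definition tau_of (q D e2 : nat) : algC :=
  'i / sqrtC (sqrtC ((q%:R : algC) ^+ (2 * D + e2))).

(* Main.v *)
Require Import Defs.
From HB Require Import structures.
From mathcomp Require Import all_boot all_order all_algebra all_field.
From mathcomp Require Import fraction.
From mathcomp.algebra_tactics Require Import ring.
From mathcomp Require Import zify.
Import Order.TTheory GRing.Theory Num.Theory.
Local Open Scope ring_scope.

Module Am.

Lemma natRF_inj (m n : nat) : (m%:R : RF) = n%:R -> m = n.
Proof.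
move=> h.
have : (tofrac (m%:R : {poly algC}) == tofrac (n%:R)).
  by rewrite !rmorph_nat h.
rewrite tofrac_eq -!polyC_natr (inj_eq polyC_inj) eqr_nat => /eqP //.
Qed.

Section Basics.
Variables (q : nat).
Hypothesis hq : (1 < q)%N.

Local Notation Q := (q%:R : RF).

Lemma Q_neq0 : Q != 0.
Proof. apply/eqP => h; have /natRF_inj : (q%:R : RF) = 0%:R by rewrite h. lia. Qed.

Lemma QX_inj m n : Q ^+ m = Q ^+ n -> m = n.
Proof.
rewrite -!natrX => /natRF_inj.
move=> h; apply/eqP; rewrite -(eqn_exp2l _ _ hq); exact/eqP.
Qed.

Lemma QX_neq1 k : (0 < k)%N -> 1 - Q ^+ k != 0.
Proof. move=> hk; rewrite subr_eq0; apply/eqP => /esym; rewrite -(expr0 Q) => /QX_inj; lia. Qed.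

End Basics.
Section Basics2.
Variables (tau : algC).
Hypothesis htau : tau != 0.
Local Notation a := (cF tau).
Local Notation u := etaX.
Lemma a_neq0 : a != 0.
Proof. by rewrite /cF tofrac_eq0 polyC_eq0. Qed.

Lemma u_neq0 : u != 0.
Proof. by rewrite /etaX tofrac_eq0 polyX_eq0. Qed.

End Basics2.

End Am.

Set Implicit Arguments. Unset Strict Implicit. Unset Printing Implicit Defensive.

Section AbsDefs.
Variable F : fieldType.
Definition qpochA (r qq : F) (n : nat) : F := \prod_(k < n) (1 - r * qq ^+ k).
Variables (Q T u : F) (D : nat).
Definition hpolA (i : nat) (t : F) (d : nat) : F :=
  qpochA (Q ^- d) Q i / t ^+ i *
  \sum_(n < i.+1)
     (qpochA (Q ^- i) Q n * qpochA (t / u) Q n * qpochA (t * u) Q n)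
     / (qpochA 0 Q n * qpochA (Q ^- d) Q n) * (Q ^+ n / qpochA Q Q n).
Definition hhA (i : nat) : F := hpolA i T D.
Definition hperpA (j : nat) : F :=
  if j == D.-1 then
    u ^- D.-1 * \prod_(1 <= n < D) ((u - T * Q ^+ n) * (u - T^-1 * Q ^- n))
  else hpolA j (T * Q) (D - 2).
Definition hperp_prevA (i : nat) : F := if i is j.+1 then hperpA j else 0.
Definition pperpA : F := u^-1 * (u - T) * (u - T^-1 * Q ^- D).
Definition lplusA (i : nat) : F :=
  if i == D then - (u^-1 * pperpA * hperpA D.-1) / (T ^+ D.+1 * qpochA Q Q D)
  else (hhA i.+1 - pperpA * hperpA i) / (T ^+ i.+1 * (1 - Q ^+ D) * qpochA Q Q i).
Definition lminusA (i : nat) : F :=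
  if i == D then pperpA * hperpA D.-1 / (T ^+ D * qpochA Q Q D)
  else (Q ^+ D - Q ^+ i) / (T ^+ i * (Q ^+ D - 1) * qpochA Q Q i) *
       (hhA i - (1 - Q ^+ i) / (Q ^+ D - Q ^+ i) * pperpA * hperp_prevA i).
Definition lplus_prevA (i : nat) : F := if i is j.+1 then lplusA j else 0.
Definition lminus_prevA (i : nat) : F := if i is j.+1 then lminusA j else 0.
End AbsDefs.

Lemma qpochAS (F : fieldType) (r qq : F) (n : nat) : qpochA r qq n.+1 = qpochA r qq n * (1 - r * qq ^+ n).
Proof. by rewrite /qpochA big_ord_recr. Qed.

Module Dm.

Section Coef.
Variables (F : fieldType) (Q a : F) (D : nat).
Hypothesis hQ0 : Q != 0.
Hypothesis hQ1 : forall k, (0 < k)%N -> Q ^+ k != 1.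
Hypothesis ha : a != 0.

Local Notation z := (Q ^- D).
Local Notation qp r n := (qpochA r Q n).

Lemma QX_neq0 n : Q ^+ n != 0. Proof. exact: expf_neq0. Qed.
Lemma QX1 n : (0 < n)%N -> 1 - Q ^+ n != 0.
Proof. by move=> h; rewrite subr_eq0 eq_sym hQ1. Qed.
Lemma QX1' n : (0 < n)%N -> Q ^+ n - 1 != 0.
Proof. by move=> h; rewrite subr_eq0 hQ1. Qed.
Lemma QXB m n : m != n -> Q ^+ m - Q ^+ n != 0.
Proof.
wlog lt : m n / (n < m)%N.
  move=> W h; case: (ltngtP n m) => [c|c|c]; first exact: W.
  - by rewrite -opprB oppr_eq0 W // eq_sym.
  - by move: h; rewrite c eqxx.
move=> _; rewrite -(subnKC (ltnW lt)) exprD -{2}(mulr1 (Q ^+ n)) -mulrBr mulf_neq0 //.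
  exact: QX_neq0.
by apply: QX1'; lia.
Qed.
Lemma qpQ n : qpochA Q Q n != 0.
Proof.
rewrite /qpochA; apply/prodf_neq0 => k _; rewrite -exprS; exact: QX1.
Qed.
Lemma aX n : a ^+ n != 0. Proof. exact: expf_neq0. Qed.
Lemma qpochA0 (r qq : F) : qpochA r qq 0 = 1. Proof. by rewrite /qpochA big_ord0. Qed.
Lemma Q1' : 1 - Q != 0. Proof. by have := @QX1 1 isT; rewrite expr1. Qed.
Lemma QB1 m : m != 1%N -> Q ^+ m - Q != 0. Proof. by move=> h; have := @QXB m 1 h; rewrite expr1. Qed.

Ltac nz := repeat (apply/andP; split); rewrite -?exprS;
  first [ done | exact: oner_neq0 | exact: (expf_neq0 _ (mulf_neq0 ha hQ0)) | exact: QX_neq0 | exact: qpQ | exact: aX | exact: Q1' | (apply: QB1; lia)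
        | (apply: QX1; lia) | (apply: QX1'; lia) | (apply: QXB; lia)
        | (rewrite -(expr0 Q); apply: QXB; lia) ].

Lemma qpL (r : F) n : qp r n.+1 = (1 - r) * qp (r * Q) n.
Proof.
rewrite /qpochA big_ord_recl /= expr0 mulr1; congr (_ * _).
by apply: eq_bigr => k _; rewrite /bump /= exprS mulrA.
Qed.
Lemma QinvSQ j : Q ^- j.+1 * Q = Q ^- j.
Proof. by rewrite exprS invfM mulrAC mulVf // mul1r. Qed.
Lemma qpUp j n : qp (Q ^- j.+1) n.+1 = (1 - Q ^- j.+1) * qp (Q ^- j) n.
Proof. by rewrite qpL QinvSQ. Qed.
Lemma Qinv1 j : 1 - Q ^- j.+1 != 0.
Proof.
rewrite subr_eq0 eq_sym; apply/eqP => h.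
by have := hQ1 (ltn0Sn j); rewrite -[Q ^+ j.+1]invrK h invr1 eqxx.
Qed.
Lemma qpDown j n : qp (Q ^- j) n = qp (Q ^- j.+1) n.+1 / (1 - Q ^- j.+1).
Proof. by rewrite qpUp [(1 - _) * _]mulrC mulfK // Qinv1. Qed.
Lemma qp_hi j n : (j < n)%N -> qp (Q ^- j) n = 0.
Proof.
move=> h; rewrite /qpochA (bigD1 (Ordinal h)) //= mulVf ?QX_neq0 // subrr mul0r //.
Qed.

Definition Rf (j n : nat) : F := \prod_(n <= k < j) (1 - z * Q ^+ k).
Lemma Rf_nil j n : (j <= n)%N -> Rf j n = 1.
Proof. by move=> h; rewrite /Rf big_geq. Qed.
Lemma Rf_lo j n : (n < j)%N -> Rf j n = (1 - z * Q ^+ n) * Rf j n.+1.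
Proof. by move=> h; rewrite /Rf big_ltn. Qed.
Lemma Rf_hi j n : (n <= j)%N -> Rf j.+1 n = Rf j n * (1 - z * Q ^+ j).
Proof. by move=> h; rewrite /Rf big_nat_recr. Qed.

Definition Hc (j n : nat) : F := a ^- j * Q ^+ n * qp (Q ^- j) n / qp Q n * Rf j n.
Definition Gc (j n : nat) : F := (a * Q) ^- j * Q ^+ n * qp (Q ^- j) n / qp Q n * Rf j.+2 n.+2.
Definition Gcp (j n : nat) : F := if j is j'.+1 then Gc j' n else 0.
Definition eH (j n : nat) : F :=
  Hc j n.+1 * ((1 - Q ^- n.+1) * (1 - a ^+ 2 * Q ^+ n.+1)) + Hc j n * Q ^- n.
Definition xc (d : nat -> F) (n : nat) : F :=
  d n * ((1 + a ^+ 2 * Q ^+ n.+1 ^+ 2) / (a * Q ^+ n.+1)) - (if n is m.+1 then d m / (a * Q ^+ n) else 0).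

Lemma Hc_hi j n : (j < n)%N -> Hc j n = 0.
Proof. by move=> h; rewrite /Hc qp_hi // !(mulr0, mul0r). Qed.
Lemma Gc_hi j n : (j < n)%N -> Gc j n = 0.
Proof. by move=> h; rewrite /Gc qp_hi // !(mulr0, mul0r). Qed.

Ltac zsimp := rewrite ?(mul0r, mulr0, add0r, addr0, subr0, sub0r, oppr0).

Lemma B1 i n : eH i.+1 n = xc (Gc i) n - (a + z / a) * Gc i n - (1 - Q ^+ i) * (1 - z) * Gcp i n.
Proof.
rewrite /eH /xc /Gcp.
have [hn|hn] := ltnP (i.+1) n.
  case: n hn => [|m] hn //.
  rewrite !Hc_hi ?Gc_hi; try lia.
  by case: i hn => [|i'] hn; [|rewrite Gc_hi; try lia]; zsimp.
have [e|hn'] := eqVneq n i.+1.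
  subst n.
  rewrite (@Hc_hi i.+1 i.+2) // (@Gc_hi i i.+1) //.
  have -> : (if i is i'.+1 then Gc i' i.+1 else 0) = 0 by case: (i) => // i'; rewrite Gc_hi.
  rewrite /Hc /Gc !Rf_nil // qpUp !qpochAS.
  rewrite !exprS ?exprMn; field; nz.
have [e|hlt] := eqVneq n i.
  subst n; case: i hn hn' => [|i'] hn hn'.
    rewrite /Hc /Gc !qpochAS !qpochA0 (@Rf_lo 1 0) // !Rf_nil //.
    rewrite !exprS ?exprMn !expr0; field; nz.
  rewrite (@Gc_hi i' i'.+1) //.
  rewrite /Hc /Gc (@Rf_lo i'.+2 i'.+1) // (@Rf_lo i'.+3 i'.+2) // !Rf_nil //.
  rewrite !(qpUp i'.+1) !qpochAS.
  rewrite !exprS ?exprMn; field; nz.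
have {hn hn'} hlt : (n < i)%N by lia.
case: i hlt => [|i'] hlt; first by [].
case: n hlt => [|m] hlt.
  rewrite /Hc /Gc !qpochAS !qpochA0 (@Rf_lo i'.+2 0) // (@Rf_lo i'.+2 1) // (@Rf_hi i'.+2 2) //.
  rewrite !exprS ?exprMn !expr0; field; nz.
rewrite /Hc /Gc (@Rf_hi i'.+2 m.+3); last lia.
rewrite (@Rf_hi i'.+2 m.+2); last lia.
rewrite (@Rf_lo i'.+2 m.+1); last lia.
rewrite (@Rf_lo i'.+2 m.+2); last lia.
rewrite !(qpUp i'.+1) (qpDown i') !qpochAS.
rewrite !exprS ?exprMn; field; nz.
Qed.

Lemma B2 i n : (1 - z) * Gc i n = (1 - Q ^+ i * z) * eH i n - (1 - Q ^+ i) * (z * xc (Gcp i) n - (a + z / a) * Gcp i n).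
Proof.
rewrite /eH /xc /Gcp.
have [hn|hn] := ltnP i n.
  rewrite !Hc_hi ?Gc_hi; try lia.
  case: i hn => [|i'] hn; first by case: n hn => [|m] hn; zsimp.
  case: n hn => [|m] hn //.
  by rewrite !Gc_hi; try lia; zsimp.
case: i hn => [|i'] hn.
  have -> : n = 0%N by lia.
  rewrite (@Hc_hi 0 1) // /Hc /Gc ?qpochAS ?qpochA0 !Rf_nil //.
  rewrite !expr0; field; nz.
have [e|hn'] := eqVneq n i'.+1.
  subst n.
  rewrite (@Hc_hi i'.+1 i'.+2) // (@Gc_hi i' i'.+1) //.
  rewrite /Hc /Gc !Rf_nil // !(qpUp i') ?qpochAS.
  rewrite !exprS ?exprMn; field; nz.
have [e|hn''] := eqVneq n i'.
  subst n.
  case: i' hn hn' => [|j] hn hn'.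
    rewrite /Hc /Gc ?qpochAS ?qpochA0 (@Rf_lo 3 2) // (@Rf_lo 1 0) // !Rf_nil //.
    rewrite !exprS ?exprMn !expr0; field; nz.
  rewrite /Hc /Gc (@Rf_lo j.+4 j.+3) // (@Rf_lo j.+2 j.+1) // (@Rf_lo j.+3 j.+2) // !Rf_nil //.
  rewrite !(qpUp j.+1) ?qpochAS.
  rewrite !exprS ?exprMn; field; nz.
have {hn hn' hn''} hlt : (n < i')%N by lia.
case: i' hlt => [|i'] hlt; first by [].
case: n hlt => [|m] hlt.
  rewrite /Hc /Gc ?qpochAS ?qpochA0 (@Rf_hi i'.+3 2) // (@Rf_hi i'.+2 2) // (@Rf_lo i'.+2 0) // (@Rf_lo i'.+2 1) //.
  rewrite !exprS ?exprMn !expr0; field; nz.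
rewrite /Hc /Gc (@Rf_hi i'.+3 m.+3); last lia.
rewrite (@Rf_hi i'.+2 m.+3); last lia.
rewrite (@Rf_hi i'.+2 m.+2); last lia.
rewrite (@Rf_lo i'.+2 m.+1); last lia.
rewrite (@Rf_lo i'.+2 m.+2); last lia.
rewrite !(qpUp i'.+1) ?qpochAS.
rewrite !exprS ?exprMn; field; nz.
Qed.


Variable u : F.
Hypothesis hu : u != 0.
Hypothesis hD : (3 <= D)%N.

Local Notation x := (u + u^-1).
Definition Pn (t : F) (n : nat) : F := qp (t / u) n * qp (t * u) n.
Local Notation P := (Pn a).
Local Notation W := (Pn (a * Q)).

Lemma P_W n : P n.+1 = (1 - Q ^- n.+1) * (1 - a ^+ 2 * Q ^+ n.+1) * W n + Q ^- n.+1 * W n.+1.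
Proof.
rewrite /Pn (qpL (a / u)) (qpL (a * u)) (qpochAS (a * Q / u)) (qpochAS (a * Q * u)).
have -> : a / u * Q = a * Q / u by rewrite mulrAC.
have -> : a * u * Q = a * Q * u by rewrite mulrAC.
move: (qp (a * Q / u) n) (qp (a * Q * u) n) => A B.
rewrite !exprS; field; nz.
Qed.

Lemma xW n : x * W n = (1 + a ^+ 2 * Q ^+ n.+1 ^+ 2) / (a * Q ^+ n.+1) * W n - W n.+1 / (a * Q ^+ n.+1).
Proof.
rewrite /Pn !qpochAS.
move: (qp (a * Q / u) n) (qp (a * Q * u) n) => A B.
rewrite !exprS; field; nz.
Qed.

Lemma P0 : P 0 = 1. Proof. by rewrite /Pn !qpochA0 mulr1. Qed.
Lemma W0 : W 0 = 1. Proof. by rewrite /Pn !qpochA0 mulr1. Qed.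

Lemma PtoW (c : nat -> F) N :
  \sum_(n < N.+1) c n * P n =
  \sum_(n < N) (c n.+1 * ((1 - Q ^- n.+1) * (1 - a ^+ 2 * Q ^+ n.+1)) + c n * Q ^- n) * W n
  + c N * Q ^- N * W N.
Proof.
elim: N => [|N IH].
  by rewrite big_ord1 big_ord0 P0 W0 expr0 invr1 !mulr1 add0r.
rewrite big_ord_recr /= IH big_ord_recr /= P_W.
rewrite -!addrA; congr (_ + _); ring.
Qed.

Lemma xsum (d : nat -> F) N :
  x * \sum_(n < N.+1) d n * W n =
  \sum_(n < N.+1) xc d n * W n - d N / (a * Q ^+ N.+1) * W N.+1.
Proof.
elim: N => [|N IH].
  rewrite !big_ord1 /xc /= mulrCA (xW 0); ring.
rewrite big_ord_recr /= mulrDr IH [in RHS]big_ord_recr /=.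
rewrite [x * (_ * W _)]mulrCA (xW N.+1) /xc; ring.
Qed.


Lemma qp0 n : qp 0 n = 1.
Proof. by rewrite /qpochA big1 // => k _; rewrite mul0r subr0. Qed.

Lemma qp_split (r : F) i j : (i <= j)%N -> qp r j = qp r i * \prod_(i <= k < j) (1 - r * Q ^+ k).
Proof.
move=> h; rewrite /qpochA -!(big_mkord xpredT (fun k => 1 - r * Q ^+ k)).
by rewrite (big_cat_nat (leq0n i) h).
Qed.

Lemma Qd_neq1 d k : k != d -> 1 - Q ^- d * Q ^+ k != 0.
Proof.
move=> h; have -> : 1 - Q ^- d * Q ^+ k = Q ^- d * (Q ^+ d - Q ^+ k).
  by rewrite mulrBr mulVf ?QX_neq0.
by rewrite mulf_neq0 ?invr_eq0 ?QX_neq0 // QXB // eq_sym.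
Qed.

Lemma qpD_neq0 d i : (i <= d)%N -> qp (Q ^- d) i != 0.
Proof.
move=> h; rewrite /qpochA; apply/prodf_neq0 => [[k hk]] _ /=; apply: Qd_neq1; lia.
Qed.

Lemma Rf_zero j n : (n <= D)%N -> (D < j)%N -> Rf j n = 0.
Proof.
move=> h1 h2; rewrite /Rf (big_cat_nat h1 (ltnW h2)) /= (big_ltn h2).
by rewrite /= mulVf ?QX_neq0 // subrr mul0r mulr0.
Qed.

Lemma Qm2 : Q ^- (D - 2) = Q ^- D * Q ^+ 2.
Proof.
have hU : Q \is a GRing.unit by rewrite unitfE.
have h2 : (2 <= D)%N by lia.
by rewrite (exprB h2 hU) invf_div mulrC.
Qed.

Lemma qpD2_split n j : (n <= j)%N -> qp (Q ^- (D - 2)) j = qp (Q ^- (D - 2)) n * Rf j.+2 n.+2.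
Proof.
move=> h; rewrite (qp_split _ h); congr (_ * _).
rewrite /Rf -(addn2 n) big_addn.
have -> : (j.+2 - 2 = j)%N by lia.
by apply: eq_bigr => k _; rewrite Qm2 exprD; congr (_ - _); ring.
Qed.

Lemma hh_rep j N : (j <= D)%N -> (j < N)%N -> hhA Q a u D j = \sum_(n < N) Hc j n * P n.
Proof.
move=> hj hN; rewrite /hhA /hpolA mulr_sumr.
rewrite [RHS](bigID (fun n : 'I_N => (n < j.+1)%N)) /= [X in _ + X]big1 ?addr0; last first.
  by move=> [n hn] /= h; rewrite Hc_hi ?mul0r //; lia.
rewrite -(big_ord_widen N (fun n => Hc j n * P n)) //.
apply: eq_bigr => [[n hn]] _ /=.
have hnj' : (n <= j)%N by lia.
rewrite /Hc /Pn qp0 (qp_split (Q ^- D) hnj') -/(Rf j n).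
have := qpD_neq0 (leq_trans hnj' hj).
move: (qp (Q ^- D) n) => A hA.
field; rewrite hA /=; nz.
Qed.

Lemma hperp_rep_lo j N : (j < D.-1)%N -> (j < N)%N -> hperpA Q a u D j = \sum_(n < N) Gc j n * W n.
Proof.
move=> hj hN; rewrite /hperpA ifN_eq; last by lia.
rewrite /hpolA mulr_sumr.
rewrite [RHS](bigID (fun n : 'I_N => (n < j.+1)%N)) /= [X in _ + X]big1 ?addr0; last first.
  by move=> [n hn] /= h; rewrite Gc_hi ?mul0r //; lia.
rewrite -(big_ord_widen N (fun n => Gc j n * W n)) //.
apply: eq_bigr => [[n hn]] _ /=.
have hnj' : (n <= j)%N by lia.
rewrite /Gc /Pn qp0 (qpD2_split hnj').
have : qp (Q ^- (D - 2)) n != 0 by apply: qpD_neq0; lia.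
move: (qp (Q ^- (D - 2)) n) => A hA.
field; nz.
Qed.

Lemma qp_rev m : qp (Q ^- m) m = \prod_(k < m) (1 - Q ^- k.+1).
Proof.
rewrite /qpochA -(big_mkord xpredT (fun k => 1 - Q ^- m * Q ^+ k)) big_rev_mkord subn0.
apply: eq_bigr => [[k hk]] _ /=; congr (_ - _).
have -> : Q ^- m = Q ^- (m - k.+1) * Q ^- k.+1.
  by rewrite -invfM -exprD subnK.
by rewrite mulrAC mulVf ?mul1r // QX_neq0.
Qed.

Lemma prod_id m : u ^- m * \prod_(1 <= n < m.+1) ((u - a * Q ^+ n) * (u - a^-1 * Q ^- n))
  = (a * Q) ^- m * Q ^+ m * qp (Q ^- m) m / qp Q m * W m.
Proof.
elim: m => [|m IH].
  by rewrite big_geq // !expr0 !invr1 !qpochA0 W0 !mulr1 divr1.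
rewrite qp_rev in IH; rewrite qp_rev big_ord_recr /= big_nat_recr //=.
move: IH; set A := \prod_(1 <= n < m.+1) _; set V := \prod_(k < m) _ => IH.
have eA : A = (a * Q) ^- m * Q ^+ m * V / qp Q m * W m * u ^+ m.
  by rewrite -IH mulrAC mulVf ?mul1r // expf_neq0.
rewrite eA /Pn !qpochAS.
have := qpQ m; move: (qp Q m) => B hB.
move: (qp (a * Q / u) m) (qp (a * Q * u) m) => C E.
have hum : u ^+ m != 0 by exact: expf_neq0.
rewrite !exprS ?exprMn; field.
nz.
Qed.

Lemma hperp_rep_top N : (D.-1 < N)%N -> hperpA Q a u D D.-1 = \sum_(n < N) Gc D.-1 n * W n.
Proof.
move=> hN; rewrite /hperpA eqxx (bigD1 (Ordinal hN)) //= [X in _ + X]big1 ?addr0.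
  have e : D = (D.-1).+1 by lia.
  have := prod_id D.-1; rewrite -e => ->.
  by rewrite /Gc Rf_nil // mulr1.
move=> [k hk] /= hne.
have hne' : k != D.-1 by apply: contra hne => /eqP e; apply/eqP/val_inj.
case: (ltngtP k D.-1) => c; last by rewrite c eqxx in hne'.
  by rewrite /Gc Rf_zero ?mulr0 ?mul0r //; lia.
by rewrite Gc_hi ?mul0r.
Qed.

Lemma hperp_rep j N : (j <= D.-1)%N -> (j < N)%N -> hperpA Q a u D j = \sum_(n < N) Gc j n * W n.
Proof.
move=> hj hN; have [e|ne] := eqVneq j D.-1; first by subst j; apply: hperp_rep_top.
apply: hperp_rep_lo => //; lia.
Qed.


Lemma hpp_rep k N : (k <= D)%N -> (k < N)%N ->
  hperp_prevA Q a u D k = \sum_(n < N) Gcp k n * W n.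
Proof.
case: k => [|k] hk hN /=.
  by rewrite big1 // => n _; rewrite mul0r.
apply: hperp_rep; lia.
Qed.

Lemma z_neq1 : 1 - z != 0.
Proof. have -> : D = (D.-1).+1 by lia. exact: Qinv1. Qed.

Lemma E1 k : (k <= D.-1)%N -> hhA Q a u D k.+1 =
  (x - a - z / a) * hperpA Q a u D k - (1 - Q ^+ k) * (1 - z) * hperp_prevA Q a u D k.
Proof.
move=> hk.
rewrite (@hh_rep k.+1 D.+3); try lia.
rewrite PtoW (@Hc_hi k.+1 D.+2) ?mul0r ?addr0; last lia.
rewrite (@hperp_rep k D.+2); try lia.
rewrite (@hpp_rep k D.+2); try lia.
set S := \sum_(n < D.+2) Gc k n * W n.
have -> : (x - a - z / a) * S = x * S - (a + z / a) * S by ring.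
rewrite /S xsum (@Gc_hi k D.+1) ?mul0r ?subr0; last lia.
rewrite !mulr_sumr -!sumrB; apply: eq_bigr => n _.
have := B1 k n; rewrite /eH => ->; ring.
Qed.

Lemma E2 k : (k <= D.-1)%N -> hperpA Q a u D k =
  ((1 - Q ^+ k * z) * hhA Q a u D k - (1 - Q ^+ k) * (z * x - a - z / a) * hperp_prevA Q a u D k) / (1 - z).
Proof.
move=> hk.
apply: (@mulfI _ (1 - z)); first exact: z_neq1.
rewrite [RHS]mulrC divfK; last exact: z_neq1.
rewrite (@hh_rep k D.+3); try lia.
rewrite PtoW (@Hc_hi k D.+2) ?mul0r ?addr0; last lia.
rewrite (@hperp_rep k D.+2); try lia.
rewrite (@hpp_rep k D.+2); try lia.
set S := \sum_(n < D.+2) Gcp k n * W n.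
have -> : (1 - Q ^+ k) * (z * x - a - z / a) * S = (1 - Q ^+ k) * (z * (x * S) - (a + z / a) * S) by ring.
rewrite /S xsum.
have -> : Gcp k D.+1 = 0 by case: (k) hk => [|k'] hk' //; rewrite /Gcp Gc_hi //; lia.
rewrite mul0r mul0r subr0.
rewrite !mulr_sumr -!sumrB !mulr_sumr -!sumrB; apply: eq_bigr => n _.
have := B2 k n; rewrite /eH => e.
rewrite [LHS]mulrA e; ring.
Qed.

End Coef.

End Dm.

Module Cm.

Section Final.
Variables (F : fieldType) (Q a u : F) (D : nat).
Hypothesis hQ0 : Q != 0.
Hypothesis hQ1 : forall k, (0 < k)%N -> Q ^+ k != 1.
Hypothesis ha : a != 0.
Hypothesis hu : u != 0.
Hypothesis hD : (3 <= D)%N.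

Local Notation z := (Q ^- D).
Local Notation x := (u + u^-1).
Local Notation hh := (hhA Q a u D).
Local Notation hperp := (hperpA Q a u D).
Local Notation hperp_prev := (hperp_prevA Q a u D).
Local Notation lplus := (lplusA Q a u D).
Local Notation lminus := (lminusA Q a u D).
Local Notation pperp := (pperpA Q a u D).

Hypothesis E1 : forall k, (k <= D.-1)%N -> hh k.+1 = (x - a - z/a) * hperp k - (1 - Q^+k)*(1 - z) * hperp_prev k.
Hypothesis E2 : forall k, (k <= D.-1)%N -> hperp k = ((1 - Q^+k * z) * hh k - (1 - Q^+k) * (z * x - a - z/a) * hperp_prev k) / (1 - z).


Lemma QX_neq0 n : Q ^+ n != 0. Proof. exact: expf_neq0. Qed.
Lemma QX1 n : (0 < n)%N -> 1 - Q ^+ n != 0.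
Proof. by move=> h; rewrite subr_eq0 eq_sym hQ1. Qed.
Lemma QX1' n : (0 < n)%N -> Q ^+ n - 1 != 0.
Proof. by move=> h; rewrite subr_eq0 hQ1. Qed.
Lemma QXB m n : m != n -> Q ^+ m - Q ^+ n != 0.
Proof.
wlog lt : m n / (n < m)%N.
  move=> W h; case: (ltngtP n m) => [c|c|c]; first exact: W.
  - by rewrite -opprB oppr_eq0 W // eq_sym.
  - by move: h; rewrite c eqxx.
move=> _; rewrite -(subnKC (ltnW lt)) exprD -{2}(mulr1 (Q ^+ n)) -mulrBr mulf_neq0 //.
  exact: QX_neq0.
by apply: QX1'; lia.
Qed.
Lemma qpQ n : qpochA Q Q n != 0.
Proof.
rewrite /qpochA; apply/prodf_neq0 => k _; rewrite -exprS; exact: QX1.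
Qed.
Lemma aX n : a ^+ n != 0. Proof. exact: expf_neq0. Qed.

Lemma qpochA0 (r qq : F) : qpochA r qq 0 = 1. Proof. by rewrite /qpochA big_ord0. Qed.
Lemma Q1' : 1 - Q != 0. Proof. by have := @QX1 1 isT; rewrite expr1. Qed.
Lemma QB1 m : m != 1%N -> Q ^+ m - Q != 0. Proof. by move=> h; have := @QXB m 1 h; rewrite expr1. Qed.
Ltac nz := repeat (apply/andP; split); rewrite -?exprS;
  first [ done | exact: QX_neq0 | exact: qpQ | exact: aX | exact: Q1' | (apply: QB1; lia)
        | (apply: QX1; lia) | (apply: QX1'; lia) | (apply: QXB; lia)
        | (rewrite -(expr0 Q); apply: QXB; lia) ].

Lemma lplusE i : i != D -> lplus i = (hh i.+1 - pperp * hperp i) / (a ^+ i.+1 * (1 - Q ^+ D) * qpochA Q Q i).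
Proof. by rewrite /lplusA => /negbTE ->. Qed.
Lemma lminusE i : i != D -> lminus i = (Q ^+ D - Q ^+ i) / (a ^+ i * (Q ^+ D - 1) * qpochA Q Q i) *
       (hh i - (1 - Q ^+ i) / (Q ^+ D - Q ^+ i) * pperp * hperp_prev i).
Proof. by rewrite /lminusA => /negbTE ->. Qed.

Lemma QmB i : (i <= D)%N -> Q ^- (D - i) = Q ^+ i / Q ^+ D.
Proof.
move=> h; rewrite exprB //; last by rewrite unitfE.
by rewrite invf_div.
Qed.


Definition idents (i : nat) :=
  let T := a in
  [/\ u * lminus i =
        (T * Q ^+ D + T^-1) * (Q ^- (D - i) - 1) * lplus_prevA Q a u D i
        + (T * Q ^+ D + T^-1) * Q ^- (D - i) * lminus i
        + T * (Q ^+ D - Q ^+ i.+1 + 1) * lplus i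
        + T * (1 - Q ^+ i.+1) * lminus i.+1,
      u^-1 * lminus i =
        T^-1 * (1 - Q ^- (D - i)) * lminus_prevA Q a u D i
        + (T * Q ^+ D + T^-1) * (1 - Q ^- (D - i)) * lplus_prevA Q a u D i
        - T * (Q ^+ D - Q ^+ i + 1) * lplus i,
      u * lplus i =
        T^-1 * (1 - Q ^- (D - i)) * lplus_prevA Q a u D i
        - T^-1 * Q ^- (D - i) * lminus i
    & u^-1 * lplus i =
        T^-1 * Q ^- (D - i.+1) * lminus i
        + (T * Q ^+ D + T^-1) * Q ^- (D - i.+1) * lplus i
        + T * (1 - Q ^+ i.+1) * lplus i.+1].

Lemma case_generic j : (j.+2 <= D.-1)%N -> idents j.+1.
Proof.
move=> hj; rewrite /idents /lplus_prevA /lminus_prevA /= !lplusE ?lminusE; try lia.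
rewrite /hperp_prevA.
have e1 := @E1 (j.+2). have e2 := @E2 (j.+2). have e3 := @E1 (j.+1). have e4 := @E2 (j.+1). have e5 := @E1 j. have e6 := @E2 j.
rewrite /hperp_prevA in e1 e2 e3 e4 e5 e6.
rewrite ?e1 ?e2 ?e3 ?e4 ?e5 ?e6; try lia.
rewrite !QmB; try lia.
rewrite /pperpA !qpochAS !exprS.
by split; field; nz.
Qed.

Lemma case0 : idents 0.
Proof.
rewrite /idents /lplus_prevA /lminus_prevA /= !lplusE ?lminusE; try lia.
rewrite /hperp_prevA.
have e3 := @E1 1. have e4 := @E2 1. have e5 := @E1 0. have e6 := @E2 0.
rewrite /hperp_prevA in e3 e4 e5 e6.
rewrite ?e3 ?e4 ?e5 ?e6; try lia.
rewrite !QmB; try lia.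
rewrite /pperpA !qpochAS ?qpochA0 !expr0 ?exprS ?expr0.
by split; field; nz.
Qed.

Lemma caseLast j : D = j.+3 -> idents j.+2.
Proof.
move=> hDj.
rewrite /idents /lplus_prevA /lminus_prevA /=.
rewrite [lplusA _ _ _ _ j.+3]/lplusA [lminusA _ _ _ _ j.+3]/lminusA -hDj eqxx.
rewrite !lplusE ?lminusE; try lia.
rewrite /hperp_prevA.
have e1 := @E1 (j.+2). have e2 := @E2 (j.+2). have e4 := @E2 (j.+1). have e3 := @E1 (j.+1). have e5 := @E1 j. have e6 := @E2 j.
rewrite /hperp_prevA in e1 e2 e3 e4 e5 e6.
have hD1 : D.-1 = j.+2 by lia.
rewrite hD1.
rewrite ?e1 ?e2 ?e3 ?e4 ?e5 ?e6; try lia.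
rewrite !QmB; try lia.
rewrite /pperpA.
move: (hhA Q a u D j) (match j with 0%N => 0 | j0.+1 => hperpA Q a u D j0 end) => h g.
rewrite hDj !qpochAS !exprS.
by split; field; nz.
Qed.

Lemma mainA i : (i <= D.-1)%N -> idents i.
Proof.
case: i => [|i] hi; first exact: case0.
have [e|lt] : i.+1 = D.-1 \/ (i.+2 <= D.-1)%N by lia.
  have [j ej] : exists j, i = j.+1 by exists i.-1; lia.
  by subst i; apply: caseLast; lia.
by case: i hi lt => [|j] hi lt; [apply: case_generic | apply: case_generic].
Qed.

End Final.

End Cm.


Lemma c1 (r qq : RF) n : qpoch r qq n = qpochA r qq n.
Proof. by unfold qpoch, qpochA. Qed.
Lemma c2 q D tau i : hh q D tau i = hhA (q%:R) (cF tau) etaX D i.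
Proof. by rewrite /hh /hhA /hpol /hpolA !c1. Qed.
Lemma c3 q D tau j : hperp q D tau j = hperpA (q%:R) (cF tau) etaX D j.
Proof. by rewrite /hperp /hperpA /hpol /hpolA !c1. Qed.
Lemma c4 q D tau : pperp q D tau = pperpA (q%:R) (cF tau) etaX D.
Proof. by rewrite /pperp /pperpA. Qed.
Lemma c5 q D tau j : hperp_prev q D tau j = hperp_prevA (q%:R) (cF tau) etaX D j.
Proof. by case: j => [|j]; [reflexivity | exact: c3]. Qed.
Lemma c6 q D tau i : lplus q D tau i = lplusA (q%:R) (cF tau) etaX D i.
Proof. by rewrite /lplus /lplusA !c1 !c2 !c3 !c4. Qed.
Lemma c7 q D tau i : lminus q D tau i = lminusA (q%:R) (cF tau) etaX D i.
Proof. by rewrite /lminus /lminusA !c1 !c2 !c5 !c3 !c4. Qed.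
Lemma c8 q D tau i : lplus_prev q D tau i = lplus_prevA (q%:R) (cF tau) etaX D i.
Proof. by case: i => [|i]; [reflexivity | exact: c6]. Qed.
Lemma c9 q D tau i : lminus_prev q D tau i = lminus_prevA (q%:R) (cF tau) etaX D i.
Proof. by case: i => [|i]; [reflexivity | exact: c7]. Qed.

Theorem theorem9p5 (q D e2 : nat) (p k : nat) :
  prime p -> (0 < k)%N -> q = (p ^ k)%N ->
  (3 <= D)%N ->
  (e2 <= 4)%N -> (odd e2 -> exists r : nat, q = (r ^ 2)%N) ->
  let tau := tau_of q D e2 in
  let T : RF := cF tau in
  let Q : RF := q%:R in
  forall i : nat, (i <= D.-1)%N ->
  [/\ etaX * lminus q D tau i =
        (T * Q ^+ D + T^-1) * (Q ^- (D - i) - 1) * lplus_prev q D tau i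
        + (T * Q ^+ D + T^-1) * Q ^- (D - i) * lminus q D tau i
        + T * (Q ^+ D - Q ^+ i.+1 + 1) * lplus q D tau i
        + T * (1 - Q ^+ i.+1) * lminus q D tau i.+1,
      etaX^-1 * lminus q D tau i =
        T^-1 * (1 - Q ^- (D - i)) * lminus_prev q D tau i
        + (T * Q ^+ D + T^-1) * (1 - Q ^- (D - i)) * lplus_prev q D tau i
        - T * (Q ^+ D - Q ^+ i + 1) * lplus q D tau i,
      etaX * lplus q D tau i =
        T^-1 * (1 - Q ^- (D - i)) * lplus_prev q D tau i
        - T^-1 * Q ^- (D - i) * lminus q D tau i
    & etaX^-1 * lplus q D tau i =
        T^-1 * Q ^- (D - i.+1) * lminus q D tau i
        + (T * Q ^+ D + T^-1) * Q ^- (D - i.+1) * lplus q D tau i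
        + T * (1 - Q ^+ i.+1) * lplus q D tau i.+1].
Proof.
move=> hp hk hqe hD he2 hodd tau T Q i hi.
have hq : (1 < q)%N.
  rewrite hqe; apply: (leq_trans (prime_gt1 hp)).
  by rewrite -{1}(expn1 p) leq_pexp2l // prime_gt0.
have htau : tau != 0.
  rewrite /tau /tau_of mulf_neq0 ?neq0Ci // invr_eq0 !sqrtC_eq0 expf_neq0 // pnatr_eq0.
  lia.
have hQ0 : (q%:R : RF) != 0 := @Am.Q_neq0 q hq.
have hQ1 : forall k0, (0 < k0)%N -> (q%:R : RF) ^+ k0 != 1.
  by move=> k0 hk0; have := @Am.QX_neq1 q hq k0 hk0; rewrite subr_eq0 eq_sym.
have ha := @Am.a_neq0 tau htau.
have hu := Am.u_neq0.
have := Cm.mainA hQ0 hQ1 ha hu hD (Dm.E1 hQ0 hQ1 ha hu hD) (Dm.E2 hQ0 hQ1 ha hu hD) hi.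
by rewrite /Cm.idents /T /Q !c6 !c7 !c8 !c9.
Qed.
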